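(* Fix $u_{\max}>0$, $u^*\in[0,u_{\max}]$, $u_a\in[0,u_{\max}]$, $C\ge0$, and consider the problem (P2): $\min_{z\in\mathcal C_b}\{z^2: q(z)\le -C\}$ where $q(z)=g(u_a,z)$. Then $q'(z)=\frac1{\hat u}(z-u^* )(z-\hat u)$. Let $m=\frac{2u^*+u_{\max}}4$ and $\gamma=\max\{u^*,\hat u\}$. (i) If $u^*\ne\hat u$: if $-C\ge q(m)$, the optimal solution of (P2) is $z=m$; if $q(\gamma)\le -C<q(m)$, the optimal solution is the smallest root of $q(z)=-C$ in $(m,u_{\max}]$; if $-C<q(\gamma)$, (P2) is infeasible. (ii) If $u^*=\hat u$: if $-C\ge q(m)$, the optimal solution is $z=m$; if $-C<q(m)$, (P2) is infeasible.
   Context: $f(u)=u(1-u/u_{\max})$ on $[0,u_{\max}]$, $\hat u=u_{\max}/2$ its unique maximizer, $F$ a primitive of $f$, $g(s,z)=(s-u^* )f(s)-(z-u^* )f(z)-F(s)+F(z)$, and $\mathcal C_b=[\frac{2u^*+u_{\max}}4,u_{\max}]$. *)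

(* Defs.v *)
From Stdlib Require Import Reals.
From Coquelicot Require Import Coquelicot.
Open Scope R_scope.

Definition f (umax u : R) : R := u * (1 - u / umax).
(* a primitive of f (g does not depend on the choice of constant) *)
Definition F (umax u : R) : R := u ^ 2 / 2 - u ^ 3 / (3 * umax).
(* unique maximizer of f *)
Definition uhat (umax : R) : R := umax / 2.
Definition g (umax ustar s z : R) : R :=
  (s - ustar) * f umax s - (z - ustar) * f umax z - F umax s + F umax z.
Definition in_Cb (umax ustar z : R) : Prop :=
  (2 * ustar + umax) / 4 <= z <= umax.

Definition P2_feasible (umax ustar ua C z : R) : Prop :=
  in_Cb umax ustar z /\ g umax ustar ua z <= - C.

Definition P2_optimal (umax ustar ua C z : R) : Prop :=
  P2_feasible umax ustar ua C z /\
  forall w, P2_feasible umax ustar ua C w -> w <> z -> z ^ 2 < w ^ 2.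

Definition P2_infeasible (umax ustar ua C : R) : Prop :=
  ~ (exists z, P2_feasible umax ustar ua C z).

(* Main.v *)
Require Import Defs.
From Stdlib Require Import Reals Lra Psatz.
From Coquelicot Require Import Coquelicot.
Open Scope R_scope.

Lemma q_der umax ustar ua z : 0 < umax ->
  is_derive (fun z => g umax ustar ua z) z (/ uhat umax * (z - ustar) * (z - uhat umax)).
Proof.
  intros H. unfold g, Defs.f, F, uhat.
  auto_derive; [exact I|]. field. lra.
Qed.

Lemma q_mvt umax ustar ua a b : 0 < umax -> a < b ->
  exists c, a < c < b /\
   g umax ustar ua b - g umax ustar ua a =
     (/ uhat umax * (c - ustar) * (c - uhat umax)) * (b - a).
Proof.
  intros H Hab.
  destruct (MVT_cor2 (fun z => g umax ustar ua z)
     (fun z => / uhat umax * (z - ustar) * (z - uhat umax)) a b Hab) as [c [Hc1 Hc2]].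
  - intros c _. apply is_derive_Reals. apply q_der; auto.
  - exists c; split; auto.
Qed.

Lemma q_cont umax ustar ua : 0 < umax -> continuity (fun z => g umax ustar ua z).
Proof.
  intros H x. apply derivable_continuous_pt.
  exists (/ uhat umax * (x - ustar) * (x - uhat umax)).
  apply is_derive_Reals. apply q_der; auto.
Qed.

Theorem mainTheorem5 (umax ustar ua C : R) :
  0 < umax -> 0 <= ustar <= umax -> 0 <= ua <= umax -> 0 <= C ->
  let q := fun z => g umax ustar ua z in
  let m := (2 * ustar + umax) / 4 in
  let gamma := Rmax ustar (uhat umax) in
  (forall z, is_derive q z (/ uhat umax * (z - ustar) * (z - uhat umax))) /\
  (ustar <> uhat umax ->
     (q m <= - C -> P2_optimal umax ustar ua C m) /\
     (q gamma <= - C < q m ->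
        exists z, m < z <= umax /\ q z = - C /\
          (forall w, m < w <= umax -> q w = - C -> z <= w) /\
          P2_optimal umax ustar ua C z) /\
     (- C < q gamma -> P2_infeasible umax ustar ua C)) /\
  (ustar = uhat umax ->
     (q m <= - C -> P2_optimal umax ustar ua C m) /\
     (- C < q m -> P2_infeasible umax ustar ua C)).
Proof.
  intros Hu Hs Ha HC q m gamma.
  assert (Hh : uhat umax = umax / 2) by reflexivity.
  assert (Hhp : 0 < / uhat umax) by (apply Rinv_0_lt_compat; lra).
  assert (Hm0 : 0 <= m) by (unfold m; lra).
  assert (Hg1 : ustar <= gamma /\ uhat umax <= gamma /\ gamma <= umax /\
                (gamma = ustar \/ gamma = uhat umax)).
  { unfold gamma, Rmax; destruct (Rle_dec ustar (uhat umax)); lra. }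
  assert (Hmg : m <= gamma) by (unfold m; lra).
  assert (Opt_m : q m <= - C -> P2_optimal umax ustar ua C m).
  { intros Hq. split. split; [unfold in_Cb, m; lra | exact Hq].
    intros w [[Hw1 Hw2] _] Hne. fold m in Hw1. assert (m < w) by lra. nra. }
  assert (Inc : forall a b, gamma <= a -> a < b -> q a <= q b).
  { intros a b Ha' Hab. destruct (q_mvt umax ustar ua a b Hu Hab) as [c [Hc Heq]].
    unfold q. assert (0 <= (c - ustar) * (c - uhat umax)) by nra.
    assert (0 <= / uhat umax * (c - ustar) * (c - uhat umax)) by
      (rewrite Rmult_assoc; apply Rmult_le_pos; lra).
    nra. }
  split; [intro z; apply q_der; auto|].
  split.
  - intros Hne.
    assert (Hmin : m > Rmin ustar (uhat umax) /\ m < gamma).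
    { unfold m, Rmin; destruct (Rle_dec ustar (uhat umax)); split; try lra.
      all: destruct Hg1 as [? [? [? [E|E]]]]; lra. }
    assert (Dec : forall a b, m <= a -> a < b -> b <= gamma -> q b < q a).
    { intros a b Ha' Hab Hb. destruct (q_mvt umax ustar ua a b Hu Hab) as [c [Hc Heq]].
      unfold q.
      assert ((c - ustar) * (c - uhat umax) < 0).
      { revert Hmin; unfold Rmin; destruct (Rle_dec ustar (uhat umax)); intros Hmin;
        destruct Hg1 as [? [? [? [E|E]]]]; nra. }
      assert (/ uhat umax * (c - ustar) * (c - uhat umax) < 0) by
        (rewrite Rmult_assoc; nra).
      nra. }
    assert (Low : forall w, m <= w <= umax -> q gamma <= q w).
    { intros w Hw. destruct (Rle_lt_dec w gamma).
      - destruct (Req_dec w gamma); [subst; lra|]. left; apply Dec; lra.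
      - apply Inc; lra. }
    split; [exact Opt_m|]. split.
    + intros [Hg Hm].
      destruct (IVT_gen q m gamma (- C) (q_cont umax ustar ua Hu)) as [z [Hz Hqz]].
      { unfold Rmin, Rmax; destruct (Rle_dec (q m) (q gamma)); lra. }
      rewrite Rmin_left in Hz by lra. rewrite Rmax_right in Hz by lra.
      assert (Hzm : m < z) by (destruct (Req_dec z m); [subst; lra | lra]).
      assert (Below : forall w, m <= w < z -> - C < q w).
      { intros w Hw. rewrite <- Hqz. apply Dec; lra. }
      exists z. split; [lra|]. split; [exact Hqz|]. split.
      * intros w Hw Hqw. destruct (Rlt_le_dec w z); [|lra].
        assert (- C < q w) by (apply Below; lra). lra.
      * split. split; [unfold in_Cb; fold m; lra | unfold q in Hqz; lra].
        intros w [[Hw1 Hw2] Hqw] Hwne. fold m in Hw1.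
        destruct (Rlt_le_dec w z).
        { assert (- C < q w) by (apply Below; lra). unfold q in *; lra. }
        assert (z < w) by lra. nra.
    + intros Hg [z [[Hz1 Hz2] Hqz]]. fold m in Hz1.
      assert (q gamma <= q z) by (apply Low; lra). unfold q in *; lra.
  - intros Heq.
    assert (Hgm : gamma = m).
    { unfold gamma, m. rewrite Heq, Rmax_left by lra. rewrite Hh; lra. }
    split; [exact Opt_m|].
    intros Hm [z [[Hz1 Hz2] Hqz]]. fold m in Hz1.
    destruct (Req_dec z m); [subst; unfold q in *; lra|].
    assert (q m <= q z) by (apply Inc; lra). unfold q in *; lra.
Qed.
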